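(* The set $\mathcal{SM}$ of strong minuscule elements of $W$ decomposes as the disjoint union \[\mathcal{SM}=\bigsqcup_{i\in K}\mathcal{SM}_i,\qquad \mathcal{SM}_i:=\{w\in\mathcal{SM}\mid \Lambda_w=\Lambda_i\}.\] In particular, for every strong minuscule $w$, $\Lambda_w$ is a fundamental weight $\Lambda_i$ with $i\in K$.
   Context: Let $\mathfrak g$ be a finite-dimensional simple Lie algebra over $\mathbb C$ of type $\mathrm A_n$, $\mathrm B_n$, $\mathrm C_n$ or $\mathrm D_n$, with index set $I=\{1,\dots,n\}$, simple roots $\alpha_i$, simple coroots $\alpha_i^\vee$, fundamental weights $\Lambda_i$, integral weights $P=\bigoplus_i\mathbb Z\Lambda_i$, dominant integral weights $P^+=\sum_i\mathbb Z_{\ge0}\Lambda_i$, and Weyl group $W$ generated by simple reflections $s_i$. The Dynkin diagrams are labeled as follows: type $\mathrm A_n$: chain $1-2-\cdots-n$; type $\mathrm B_n$: chain $1-2-\cdots-n$ with a double bond between $1$ and $2$, $\alpha_1$ short and $\alpha_2,\dots,\alpha_n$ long; type $\mathrm C_n$: chain $1-2-\cdots-n$ with a double bond between $1$ and $2$, $\alpha_1$ long and $\alpha_2,\dots,\alpha_n$ short; type $\mathrm D_n$: chain $n-(n-1)-\cdots-3$ with node $3$ joined to both nodes $1$ and $2$. Set $K=I$ in types $\mathrm A_n,\mathrm D_n$, $K=\{1\}$ in type $\mathrm B_n$, $K=I\setminus\{1\}$ in type $\mathrm C_n$. For $\Lambda\in P$, $w\in W$ is $\Lambda$-minuscule if there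 is a reduced expression $w=s_{i_1}\cdots s_{i_r}$ with $\langle s_{i_{p+1}}\cdots s_{i_r}(\Lambda),\alpha_{i_p}^\vee\rangle=1$ for all $1\le p\le r$; $w$ is dominant minuscule if it is $\Lambda$-minuscule for some $\Lambda\in P^+$. A dominant minuscule $w$ is strong minuscule if there is a unique $\Lambda\in P^+$, denoted $\Lambda_w$, such that $w$ is $\Lambda$-minuscule; $\mathcal{SM}$ denotes the set of strong minuscule elements. *)

(* Defs.v *)
From mathcomp Require Import all_boot all_order all_algebra.
Set Implicit Arguments. Unset Strict Implicit. Unset Printing Implicit Defensive.
Import GRing.Theory Num.Theory.
Local Open Scope ring_scope.

(* Node k of the paper (1 <= k <= n) is the ordinal
   k-1 : 'I_n.  Weights are written in the basis of fundamental weights: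
   lam : {ffun 'I_n -> int} stands for sum_j lam j * Lambda_j, so that
   <lam, alpha_j^vee> = lam j. *)
Inductive ctype := TA | TB | TC | TD.

Definition valid_rank (t : ctype) (n : nat) : bool :=
  match t with
  | TA => (1 <= n)%N
  | TB | TC => (2 <= n)%N
  | TD => (4 <= n)%N
  end.

(* cartan t a b = < alpha_a , alpha_b^vee >, for nodes a b numbered from 1. *)
Definition cartan (t : ctype) (a b : nat) : int :=
  if a == b then 2 else
  match t with
  | TA => if (a == b.+1) || (b == a.+1) then -1 else 0
  | TB => if (a == 2%N) && (b == 1%N) then -2
          else if (a == b.+1) || (b == a.+1) then -1 else 0
  | TC => if (a == 1%N) && (b == 2%N) then -2
          else if (a == b.+1) || (b == a.+1) then -1 else 0
  | TD => if [|| (a == 1%N) && (b == 3%N), (a == 3%N) && (b == 1%N),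
               (a == 2%N) && (b == 3%N), (a == 3%N) && (b == 2%N),
               (3 <= a)%N && (b == a.+1) | (3 <= b)%N && (a == b.+1)]
          then -1 else 0
  end.

Definition weight (n : nat) := {ffun 'I_n -> int}.

Definition fund (n : nat) (i : 'I_n) : weight n :=
  [ffun j => if j == i then 1 else 0].

Definition dominant (n : nat) (lam : weight n) : Prop := forall j, 0 <= lam j.

Definition sref (t : ctype) (n : nat) (i : 'I_n) (lam : weight n) : weight n :=
  [ffun j => lam j - lam i * cartan t i.+1 j.+1].

(* A word [:: i_1; ...; i_r] represents s_{i_1} ... s_{i_r}; its action on P. *)
Definition act (t : ctype) (n : nat) (w : seq 'I_n) (lam : weight n) : weight n :=
  foldr (@sref t n) lam w.

(* Elements of W are words modulo equality of their action on P
   (W acts faithfully on P). *)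
Definition weq (t : ctype) (n : nat) (u v : seq 'I_n) : Prop :=
  forall lam : weight n, act t u lam = act t v lam.

Definition reduced (t : ctype) (n : nat) (u : seq 'I_n) : Prop :=
  forall v, weq t v u -> (size u <= size v)%N.

Definition minuscule (t : ctype) (n : nat) (Lam : weight n) (w : seq 'I_n) : Prop :=
  exists u : seq 'I_n, [/\ weq t u w, reduced t u &
    forall p : nat, (1 <= p <= size u)%N -> forall i0 : 'I_n,
      (act t (drop p u) Lam) (nth i0 u p.-1) = 1].

Definition dominant_minuscule (t : ctype) (n : nat) (w : seq 'I_n) : Prop :=
  exists Lam : weight n, dominant Lam /\ minuscule t Lam w.

Definition strong_minuscule (t : ctype) (n : nat) (w : seq 'I_n) : Prop :=
  exists! Lam : weight n, dominant Lam /\ minuscule t Lam w.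

Definition Kset (t : ctype) (n : nat) (i : 'I_n) : bool :=
  match t with
  | TA | TD => true
  | TB => val i == 0%N
  | TC => val i != 0%N
  end.

(* Main.v *)
Require Import Defs.
From mathcomp Require Import all_boot all_order all_algebra.
From mathcomp Require Import zify.
Set Implicit Arguments. Unset Strict Implicit. Unset Printing Implicit Defensive.
Import GRing.Theory Num.Theory.
Local Open Scope ring_scope.


Lemma cartan_diag t a : cartan t a a = 2.
Proof. by rewrite /cartan eqxx. Qed.

Lemma cartan_off t a b : a != b -> cartan t a b <= 0.
Proof.
move=> /negbTE nab; rewrite /cartan nab.
by case: t; repeat case: ifP.
Qed.

Lemma actsum t n (u : seq 'I_n) (Lam : weight n)
  (H : forall p, (1 <= p <= size u)%N -> forall i0 : 'I_n,
        (act t (drop p u) Lam) (nth i0 u p.-1) = 1) :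
  forall k, (k <= size u)%N -> forall x,
   act t (drop (size u - k) u) Lam x
     = Lam x - \sum_(y <- drop (size u - k) u) cartan t y.+1 x.+1.
Proof.
elim=> [|k IH] hk x.
  by rewrite subn0 drop_size big_nil subr0.
have hk' : (k <= size u)%N by apply: ltnW.
have lt : (size u - k.+1 < size u)%N by lia.
rewrite (drop_nth x lt) big_cons /= /sref ffunE.
have e : ((size u - k.+1).+1 = size u - k)%N by lia.
rewrite e IH //.
have := H (size u - k)%N _ x.
rewrite -e /= => ->; last by lia.
by rewrite mul1r opprD addrA addrAC.
Qed.

Lemma sum_le1 n (s : seq 'I_n) (f : 'I_n -> int) y :
  y \in s -> (forall z, z \in s -> f z <= 0) -> \sum_(z <- s) f z <= f y.
Proof.
elim: s => // x s IH; rewrite inE => /orP[/eqP<-|ys] hf; rewrite big_cons.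
  rewrite gerDl big_seq; apply: sumr_le0 => z zs; apply: hf; by rewrite inE zs orbT.
rewrite -[f y]add0r; apply: lerD; first exact: hf (mem_head _ _).
by apply: IH => // z zs; apply: hf; rewrite inE zs orbT.
Qed.

Lemma sum_le2 n (s : seq 'I_n) (f : 'I_n -> int) y z :
  y != z -> y \in s -> z \in s -> (forall z, z \in s -> f z <= 0) ->
  \sum_(x <- s) f x <= f y + f z.
Proof.
move=> nyz; elim: s => // x s IH; rewrite !inE => ys zs hf; rewrite big_cons.
have hf' : forall z, z \in s -> f z <= 0 by move=> w ws; apply: hf; rewrite inE ws orbT.
case/orP: ys => [/eqP ey|ys].
  subst x. case/orP: zs => [/eqP ez|zs]; first by rewrite ez eqxx in nyz.
  by apply: lerD => //; apply: sum_le1.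
case/orP: zs => [/eqP ez|zs].
  subst x. rewrite addrC; apply: lerD => //; exact: sum_le1.
rewrite -[_ + f z]add0r; apply: lerD; first exact: hf (mem_head _ _).
exact: IH.
Qed.


Lemma ff t n (u : seq 'I_n) (Lam : weight n)
  (H : forall p, (1 <= p <= size u)%N -> forall i0 : 'I_n,
        (act t (drop p u) Lam) (nth i0 u p.-1) = 1) b :
  b \in u ->
  Lam b - \sum_(y <- take (index b (rev u)) (rev u)) cartan t y.+1 b.+1 = 1.
Proof.
move=> bu; set k := index b (rev u).
have kl : (k < size u)%N by rewrite -size_rev index_mem mem_rev.
have e1 := actsum H (ltnW kl) b.
rewrite take_rev big_rev -e1.
have := H (size u - k)%N _ b.
rewrite (_ : ((size u - k).-1 = size u - k.+1)%N); last by lia.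
rewrite -nth_rev // nth_index ?mem_rev // => -> //. lia.
Qed.

Lemma mem_take_index (T : eqType) (r : seq T) y k : (k <= size r)%N ->
  (y \in take k r) = (y \in r) && (index y r < k)%N.
Proof.
move=> kr; apply/idP/idP.
  move=> yt; have yr : y \in r by apply: mem_take yt.
  rewrite yr /= -[r in index _ r](cat_take_drop k) index_cat yt.
  by rewrite -{2}(size_takel kr) index_mem.
case/andP=> yr lt; rewrite -(nth_index y yr) -(nth_take _ lt) mem_nth //.
by rewrite size_takel.
Qed.

Lemma c2 t n (u : seq 'I_n) (Lam : weight n)
  (H : forall p, (1 <= p <= size u)%N -> forall i0 : 'I_n,
        (act t (drop p u) Lam) (nth i0 u p.-1) = 1) b y :
  b \in u -> y \in u -> (index y (rev u) < index b (rev u))%N ->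
  Lam b - cartan t y.+1 b.+1 <= 1.
Proof.
move=> bu yu lt; have hf := ff H bu.
have kl : (index b (rev u) <= size (rev u))%N by rewrite ltnW // index_mem mem_rev.
have hs : \sum_(z <- take (index b (rev u)) (rev u)) cartan t z.+1 b.+1 <= cartan t y.+1 b.+1.
  apply: sum_le1; first by rewrite mem_take_index // mem_rev yu.
  move=> z; rewrite mem_take_index // => /andP[_ zl]; apply: cartan_off.
  rewrite eqSS; apply/eqP => e. have ez : z = b by apply: val_inj.
  by rewrite ez ltnn in zl.
rewrite -hf; apply: lerD => //; by rewrite lerN2.
Qed.

Lemma c3 t n (u : seq 'I_n) (Lam : weight n)
  (H : forall p, (1 <= p <= size u)%N -> forall i0 : 'I_n,
        (act t (drop p u) Lam) (nth i0 u p.-1) = 1) b y z :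
  b \in u -> y \in u -> z \in u -> y != z ->
  (index y (rev u) < index b (rev u))%N ->
  (index z (rev u) < index b (rev u))%N ->
  Lam b - cartan t y.+1 b.+1 - cartan t z.+1 b.+1 <= 1.
Proof.
move=> bu yu zu nyz lt lt'; have hf := ff H bu.
have kl : (index b (rev u) <= size (rev u))%N by rewrite ltnW // index_mem mem_rev.
have hs : \sum_(x <- take (index b (rev u)) (rev u)) cartan t x.+1 b.+1
     <= cartan t y.+1 b.+1 + cartan t z.+1 b.+1.
  apply: sum_le2 => //; first by rewrite mem_take_index // mem_rev yu.
    by rewrite mem_take_index // mem_rev zu.
  move=> x; rewrite mem_take_index // => /andP[_ zl]; apply: cartan_off.
  rewrite eqSS; apply/eqP => e. have ez : x = b by apply: val_inj.
  by rewrite ez ltnn in zl.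
rewrite -hf -addrA -opprD; apply: lerD => //; by rewrite lerN2.
Qed.

Definition shiftw n (lam : weight n) (j : 'I_n) : weight n :=
  [ffun k => lam k + (k == j)%:Z].

Lemma act_shift t n (s : seq 'I_n) lam j : j \notin s ->
  act t s (shiftw lam j) = shiftw (act t s lam) j.
Proof.
elim: s => // x s IH; rewrite inE negb_or => /andP[njx js] /=.
rewrite IH //; apply/ffunP => k; rewrite /sref !ffunE.
rewrite eq_sym in njx; by rewrite (negbTE njx) /= addr0 addrAC.
Qed.


Lemma adjABC t k : t <> TD ->
  cartan t k.+1 k.+2 < 0 /\ cartan t k.+2 k.+1 < 0.
Proof.
have h1 : (k.+1 == k.+2) = false by rewrite ltn_eqF.
have h2 : (k.+2 == k.+1) = false by rewrite gtn_eqF.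
rewrite /cartan h1 h2 !eqxx ?orbT.
by case: t => //= _; split; repeat case: ifP.
Qed.

Lemma adjD k : (2 <= k)%N ->
  cartan TD k.+1 k.+2 < 0 /\ cartan TD k.+2 k.+1 < 0.
Proof.
move=> k2.
have h1 : (k.+1 == k.+2) = false by rewrite ltn_eqF.
have h2 : (k.+2 == k.+1) = false by rewrite gtn_eqF.
have k3 : (3 <= k.+1)%N by [].
rewrite /cartan h1 h2 !eqxx k3 /= !orbT.
by split.
Qed.


Lemma comb_nat t N (hN : valid_rank t N) (T : nat -> nat) (L : nat -> int)
 (dom : forall b, (b < N)%N -> 0 <= L b)
 (C2 : forall y b, (y < N)%N -> (b < N)%N -> (T y < T b)%N ->
        L b - cartan t y.+1 b.+1 <= 1)
 (C3 : forall y z b, (y < N)%N -> (z < N)%N -> (b < N)%N -> y != z ->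
        (T y < T b)%N -> (T z < T b)%N ->
        L b - cartan t y.+1 b.+1 - cartan t z.+1 b.+1 <= 1)
 (Ttot : forall a b, (a < N)%N -> (b < N)%N -> a != b ->
        (T a < T b)%N || (T b < T a)%N)
 j (hj : (j < N)%N) (Lj : L j = 1) :
 (forall x, (x < N)%N -> x != j -> L x = 0) /\
 (match t with TB => j == 0%N | TC => j != 0%N | _ => true end).
Proof.
have start : forall a b, (a < N)%N -> (b < N)%N -> a != b -> L a = 1 ->
    cartan t b.+1 a.+1 < 0 -> (T a < T b)%N.
  move=> a b aN bN nab La cba.
  case/orP: (Ttot a b aN bN nab) => // lt.
  have := C2 b a bN aN lt; rewrite La; lia.
have step : forall a b c, (a < N)%N -> (b < N)%N -> (c < N)%N -> c != a ->
    (T a < T b)%N -> cartan t a.+1 b.+1 < 0 -> cartan t c.+1 b.+1 < 0 ->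
    (T b < T c)%N.
  move=> a b c aN bN cN nca lab cab ccb.
  have ncb : b != c.
    apply/eqP=> e; move: ccb; rewrite -e cartan_diag; lia.
  case/orP: (Ttot b c bN cN ncb) => // lt.
  have := C3 a c b aN cN bN ltac:(by rewrite eq_sym) lab lt.
  have := dom b bN; lia.
have zero : forall a b, (a < N)%N -> (b < N)%N -> (T a < T b)%N ->
    cartan t a.+1 b.+1 < 0 -> L b = 0 /\ cartan t a.+1 b.+1 = -1.
  move=> a b aN bN lt cab; have := C2 a b aN bN lt; have := dom b bN; lia.
have up : forall lo, (forall k, (lo <= k)%N -> (k.+1 < N)%N ->
      cartan t k.+1 k.+2 < 0 /\ cartan t k.+2 k.+1 < 0) ->
    forall a, (lo <= a)%N -> (a.+1 < N)%N -> (T a < T a.+1)%N ->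
    forall x, (a < x < N)%N -> L x = 0 /\ cartan t x x.+1 = -1.
  move=> lo adj a loa aN st.
  have ch : forall d, (a + d.+1 < N)%N -> (T (a + d) < T (a + d).+1)%N.
    elim=> [|d IH] hd; first by rewrite addn0.
    have hd' : (a + d.+1 < N)%N by lia.
    have [c1 _] := adj (a + d)%N ltac:(lia) ltac:(lia).
    have [_ c2] := adj (a + d).+1 ltac:(lia) ltac:(lia).
    rewrite addnS; apply: step (IH hd') c1 c2; lia.
  move=> x /andP[ax xN].
  have e : x = (a + (x - a - 1)).+1 by lia.
  have [c1 _] := adj (a + (x - a - 1))%N ltac:(lia) ltac:(lia).
  have := zero _ _ _ _ (ch (x - a - 1)%N ltac:(lia)) c1.
  by rewrite -e; apply; lia.
have down : forall lo, (forall k, (lo <= k)%N -> (k.+1 < N)%N ->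
      cartan t k.+1 k.+2 < 0 /\ cartan t k.+2 k.+1 < 0) ->
    forall b, (lo <= b)%N -> (b.+1 < N)%N -> (T b.+1 < T b)%N ->
    forall x, (lo <= x <= b)%N -> [/\ L x = 0, cartan t x.+2 x.+1 = -1 & (T x.+1 < T x)%N].
  move=> lo adj b lob bN st.
  have ch : forall d, (d <= b - lo)%N -> (T (b - d).+1 < T (b - d))%N.
    elim=> [|d IH] hd; first by rewrite subn0.
    have e : (b - d = (b - d.+1).+1)%N by lia.
    have := IH ltac:(lia); rewrite e => h.
    have [c1 _] := adj (b - d.+1)%N ltac:(lia) ltac:(lia).
    have [_ c2] := adj (b - d.+1).+1 ltac:(lia) ltac:(lia).
    apply: step h c2 c1; lia.
  move=> x /andP[lox xb].
  have e : x = (b - (b - x))%N by lia.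
  have [_ c2] := adj x lox ltac:(lia).
  have := ch (b - x)%N ltac:(lia); rewrite -e => lt.
  have [] := zero x.+1 x ltac:(lia) ltac:(lia) lt c2 => *; by split.
have ABC : t <> TD ->
   [/\ (forall x, (x < N)%N -> x != j -> L x = 0),
        (forall x, (j < x < N)%N -> cartan t x x.+1 = -1) &
        (forall x, (x < j)%N -> cartan t x.+2 x.+1 = -1)].
  move=> tD.
  have adj : forall k, (0 <= k)%N -> (k.+1 < N)%N ->
      cartan t k.+1 k.+2 < 0 /\ cartan t k.+2 k.+1 < 0.
    by move=> k _ _; apply: adjABC.
  have UP : forall x, (j < x < N)%N -> L x = 0 /\ cartan t x x.+1 = -1.
    move=> x /andP[jx xN].
    have [_ c] := adjABC j tD.
    have st := start j j.+1 hj ltac:(lia) ltac:(lia) Lj c.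
    by apply: (up 0%N adj j isT ltac:(lia) st x); apply/andP.
  have DOWN : forall x, (x < j)%N -> L x = 0 /\ cartan t x.+2 x.+1 = -1.
    move=> x xj.
    have e : j = (j - 1)%N.+1 by lia.
    have [c _] := adjABC (j - 1)%N tD.
    have c' : cartan t (j - 1)%N.+1 j.+1 < 0 by rewrite {2}e.
    have st := start j (j - 1)%N hj ltac:(lia) ltac:(lia) Lj c'.
    rewrite {1}e in st.
    by case: (down 0%N adj (j - 1)%N isT ltac:(lia) st x) => //; apply/andP; split=> //; lia.
  split.
  - move=> x xN nxj.
    case: (ltngtP j x) => [jx|xj|e]; last by rewrite e eqxx in nxj.
      by case: (UP x); first by apply/andP.
    by case: (DOWN x).
  - by move=> x /UP [].
  - by move=> x /DOWN [].
case E: t hN ABC => hN ABC.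
- by split => //; case: ABC.
- case: ABC => // h1 _ h3; split => //.
  case: j hj Lj h1 h3 => // j' _ _ _ h3.
  by have := h3 0%N isT.
- case: ABC => // h1 h2 _; split => //.
  case: j hj Lj h1 h2 => // _ _ _ h2.
  have N2 : (1 < N)%N := hN.
  by have := h2 1%N ltac:(lia).
subst t.
have N4 : (3 < N)%N := hN.
have adj : forall k, (2 <= k)%N -> (k.+1 < N)%N ->
    cartan TD k.+1 k.+2 < 0 /\ cartan TD k.+2 k.+1 < 0.
  by move=> k k2 _; apply: adjD.
have cD : forall y, (y < 2)%N -> cartan TD y.+1 3 < 0 /\ cartan TD 3 y.+1 < 0.
  by case=> [|[|]].
have c43 : cartan TD 4 3 < 0 by [].
split => //.
case: (leqP 2 j) => j2.
  have UP : forall x, (j < x < N)%N -> L x = 0.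
    move=> x /andP[jx xN]. have [_ c] := adjD j2.
    have st := start j j.+1 hj ltac:(lia) ltac:(lia) Lj c.
    by case: (up 2%N adj j j2 ltac:(lia) st x) => //; apply/andP.
  have DOWN : forall x, (2 <= x < j)%N -> L x = 0 /\ (T x.+1 < T x)%N.
    move=> x /andP[x2 xj].
    have e : j = (j - 1)%N.+1 by lia.
    have [c _] := @adjD (j - 1)%N ltac:(lia).
    have c' : cartan TD (j - 1)%N.+1 j.+1 < 0 by rewrite {2}e.
    have st := start j (j - 1)%N hj ltac:(lia) ltac:(lia) Lj c'.
    rewrite {1}e in st.
    by case: (down 2%N adj (j - 1)%N ltac:(lia) ltac:(lia) st x) => //; apply/andP; split=> //; lia.
  have SMALL : forall y, (y < 2)%N -> L y = 0.
    move=> y y2; have [cy1 cy2] := cD y y2.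
    have st : (T 2 < T y)%N.
      case: (ltngtP j 2) => [|j3|e]; first by lia.
        have [_ st3] := DOWN 2%N ltac:(lia).
        by apply: (step 3%N 2%N y) => //; lia.
      by apply: (start 2%N y) cy1; try lia; rewrite -e.
    by case: (zero 2%N y ltac:(lia) ltac:(lia) st cy2).
  move=> x xN nxj.
  case: (ltngtP j x) => [jx|xj|e]; last by rewrite e eqxx in nxj.
    by apply: UP; apply/andP.
  case: (leqP 2 x) => x2; first by case: (DOWN x) => //; apply/andP.
  exact: SMALL.
have [cj1 cj2] := cD j j2.
have st := start j 2%N hj ltac:(lia) ltac:(lia) Lj cj2.
have [L2 _] := zero j 2%N hj ltac:(lia) st cj1.
have SMALL : forall y, (y < 2)%N -> y != j -> L y = 0.
  move=> y y2 nyj; have [cy1 cy2] := cD y y2.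
  have st' := step j 2%N y hj ltac:(lia) ltac:(lia) nyj st cj1 cy1.
  by case: (zero 2%N y ltac:(lia) ltac:(lia) st' cy2).
have st3 := step j 2%N 3%N hj ltac:(lia) ltac:(lia) ltac:(lia) st cj1 c43.
move=> x xN nxj.
case: (ltngtP x 2) => [x2|x2|->] //; first exact: SMALL.
by case: (up 2%N adj 2%N isT ltac:(lia) st3 x) => //; apply/andP.
Qed.

Unset Implicit Arguments.
Close Scope ring_scope.
Theorem corollary6p4 (t : ctype) (n : nat) (hn : valid_rank t n)
    (w : seq 'I_n) (Lam : weight n) :
  strong_minuscule t w -> dominant Lam -> minuscule t Lam w ->
  exists! i : 'I_n, Kset t i /\ Lam = fund i.
Proof.
Local Open Scope ring_scope.
move=> [L0 [[dL0 mL0] uq]] dLam mLam.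
have e2 := uq _ (conj dLam mLam).
case: mLam => u [wu ru H].
have full : forall j : 'I_n, j \in u.
  move=> j; case: (boolP (j \in u)) => // ju.
  have d' : dominant (shiftw Lam j).
    by move=> k; rewrite ffunE; apply: addr_ge0; [exact: dLam | case: (k == j)].
  have m' : minuscule t (shiftw Lam j) w.
    exists u; split => // p hp i0.
    rewrite act_shift; last by apply: contra ju; apply: mem_drop.
    rewrite ffunE.
    have hm : nth i0 u p.-1 \in u by apply: mem_nth; case/andP: hp => h1 h2; rewrite prednK.
    have -> : (nth i0 u p.-1 == j) = false.
      by apply/negbTE/eqP => e; rewrite -e hm in ju.
    by rewrite /= addr0; apply: H.
  have e1 := uq _ (conj d' m').
  have := congr1 (fun f : weight n => f j) (etrans (esym e1) e2).
  rewrite ffunE eqxx /=; lia.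
have n0 : (0 < n)%N by move: hn; case: (t) => /=; lia.
pose o (k : nat) : 'I_n := insubd (Ordinal n0) k.
have oK : forall k, (k < n)%N -> nat_of_ord (o k) = k.
  move=> k kn; change (val (o k) = k); by rewrite /o val_insubd kn.
have oV : forall x : 'I_n, o x = x by move=> x; apply: val_inj; rewrite /= oK.
pose T k := index (o k) (rev u).
pose L k := Lam (o k).
have C2 : forall y b, (y < n)%N -> (b < n)%N -> (T y < T b)%N ->
        L b - cartan t y.+1 b.+1 <= 1.
  move=> y b yn bn lt; have := c2 H (full (o b)) (full (o y)) lt.
  by rewrite !oK.
have C3 : forall y z b, (y < n)%N -> (z < n)%N -> (b < n)%N -> y != z ->
        (T y < T b)%N -> (T z < T b)%N ->
        L b - cartan t y.+1 b.+1 - cartan t z.+1 b.+1 <= 1.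
  move=> y z b yn zn bn nyz lt lt'.
  have nyz' : o y != o z.
    by apply: contra nyz => /eqP e; rewrite -(oK y yn) -(oK z zn) e.
  have := c3 H (full (o b)) (full (o y)) (full (o z)) nyz' lt lt'.
  by rewrite !oK.
have Ttot : forall a b, (a < n)%N -> (b < n)%N -> a != b ->
        (T a < T b)%N || (T b < T a)%N.
  move=> a b an bn nab.
  case: (ltngtP (T a) (T b)) => // e.
  have ea : nth (o a) (rev u) (T a) = o a by apply: nth_index; rewrite mem_rev.
  have eb : nth (o a) (rev u) (T b) = o b by apply: nth_index; rewrite mem_rev.
  move: nab; rewrite -(oK a an) -(oK b bn) -ea -eb e eqxx //.
have dom : forall b, (b < n)%N -> 0 <= L b by move=> b _; apply: dLam.
case E: (rev u) => [|j0 r'].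
  by have := full (Ordinal n0); rewrite -mem_rev E.
have j0u : j0 \in u by rewrite -mem_rev E mem_head.
have Lj0 : Lam j0 = 1.
  have := ff H j0u; rewrite E /= eqxx take0 big_nil subr0 //.
have [Z K] := comb_nat hn dom C2 C3 Ttot (ltn_ord j0) ltac:(by rewrite /L oV).
exists j0; split.
  split; first by move: K; rewrite /Kset; case: (t).
  apply/ffunP => x; rewrite ffunE; case: eqP => [->//|nx].
  rewrite -(oV x); apply: Z => //; apply/eqP => e; apply: nx; exact: val_inj.
move=> i [_ ei]; have := congr1 (fun f : weight n => f j0) ei.
rewrite Lj0 ffunE; case: eqP => // _ /eqP; lia.
Qed.
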